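(* For every language $L=\mathrm{LLin}_\ell(\pi,\sigma,\alpha,\theta)$ there exist $\alpha'\colon\Sigma^\ell\to\mathbb R_{\ge0}$ and $\theta'$ such that $L=\mathrm{LLin}_\ell(\pi,\sigma,\alpha',\theta')$ and: (1) $\theta'=1$; (2) there is a constant $\varepsilon>0$ such that for every $w\in\Sigma^*$, either $f'(w)<1-\varepsilon$ or $f'(w)>1+\varepsilon$, where $f'(w)=\sum_{m\in\Sigma^\ell}\alpha'(m)\,|w|_m$; (3) there is $k\in\mathbb N_0$ such that for every $m\in\Sigma^\ell$ there is $n\in\{0,1,\dots,2^k-1\}$ with $\alpha'(m)=k-\log_2(n+1)$.
   Context: $\Sigma$ is a finite alphabet. For a word $w$ and $\ell\in\mathbb N_0$, $p_\ell(w)$ (resp. $s_\ell(w)$) is the prefix (resp. suffix) of $w$ of length $\ell$ if $|w|\ge\ell$ and $w$ otherwise; $|w|_m$ is the number of occurrences of $m$ as an infix of $w$. For $\ell\in\mathbb N_0$, $\theta\in\mathbb R_{\ge0}$, $\pi,\sigma\subseteq\Sigma^{\le\ell-1}$ and $\alpha\colon\Sigma^\ell\to\mathbb R_{\ge0}$, $\mathrm{LLin}_\ell(\pi,\sigma,\alpha,\theta)$ is the set of $w\in\Sigma^+$ with $p_{\ell-1}(w)\in\pi$, $s_{\ell-1}(w)\in\sigma$ and $\sum_{m\in\Sigma^\ell}\alpha(m)|w|_m\le\theta$. *)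

(* Defs.v *)
From HB Require Import structures.
From mathcomp Require Import all_boot all_order all_algebra.
From mathcomp Require Import all_classical all_reals all_analysis.
Set Implicit Arguments. Unset Strict Implicit. Unset Printing Implicit Defensive.
Import Order.TTheory GRing.Theory Num.Theory.
Local Open Scope ring_scope.

Definition pref (Sigma : finType) (l : nat) (w : seq Sigma) : seq Sigma := take l w.
Definition suff (Sigma : finType) (l : nat) (w : seq Sigma) : seq Sigma :=
  drop (size w - l) w.

(* |w|_m : number of (possibly overlapping) occurrences of m as an infix of w,
   i.e. the number of positions i with i + |m| <= |w| and w[i..i+|m|) = m. *)
Definition count_infix (Sigma : finType) (m w : seq Sigma) : nat :=
  count (fun i => (i + size m <= size w)%N && (take (size m) (drop i w) == m))
        (iota 0 (size w).+1).

Definition lin_val (R : realType) (Sigma : finType) (l : nat)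
  (alpha : l.-tuple Sigma -> R) (w : seq Sigma) : R :=
  \sum_(m : l.-tuple Sigma) alpha m * (count_infix (tval m) w)%:R.

Definition LLin (R : realType) (Sigma : finType) (l : nat)
  (pi sigma : seq Sigma -> Prop) (alpha : l.-tuple Sigma -> R) (theta : R)
  (w : seq Sigma) : Prop :=
  (0 < size w)%N /\ pi (pref l.-1 w) /\ sigma (suff l.-1 w) /\
  lin_val alpha w <= theta.

Definition log2 (R : realType) (x : R) : R := ln x / ln 2.

(* Main.v *)
From HB Require Import structures.
From mathcomp Require Import all_boot all_order all_algebra.
From mathcomp Require Import all_classical all_reals all_analysis.
Require Import Defs.
Import Order.TTheory GRing.Theory Num.Theory.
Local Open Scope ring_scope.
From mathcomp Require Import ring lra.

Lemma approx (R : realType) (x rho : R) : 0 < x -> 0 < rho ->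
  exists K : nat, forall k, (K <= k)%N -> exists n : nat, (n < 2 ^ k)%N /\
    x <= k%:R - log2 (n.+1)%:R /\ k%:R - log2 (n.+1)%:R <= (1 + rho) * x.
Proof.
move=> x0 r0.
pose L : R := ln 2.
have L0 : 0 < L by apply: ln_gt0; lra.
pose u := x * L. pose v := (1 + rho) * x * L.
have u0 : 0 < u by rewrite /u mulr_gt0.
have uv : u < v by rewrite /v /u ltr_pM2r //; nra.
pose D := expR (- u) - expR (- v).
have D0 : 0 < D by rewrite /D subr_gt0 ltr_expR; lra.
pose K := Num.Def.archi_bound D^-1.
have HK : D^-1 < K%:R by apply: archi_boundP; rewrite invr_ge0 ltW.
exists K => k Kk.
pose P : R := (2 ^ k)%:R.
have P0 : 0 < P by rewrite /P ltr0n expn_gt0.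
have kP : (k%:R : R) <= P by rewrite /P ler_nat ltnW // ltn_expl.
have PD : 1 < P * D.
  have : D^-1 < P by apply: lt_le_trans HK _; apply: le_trans kP; rewrite ler_nat.
  by rewrite -[D^-1]mul1r ltr_pdivrMr // mulrC.
pose y := P * expR (- v).
have y0 : 0 < y by rewrite /y mulr_gt0 // expR_gt0.
pose n := Num.Def.truncn y.
have /andP [ny yn] := truncn_itv (ltW y0).
have jle : (n.+1%:R : R) <= P * expR (- u).
  have e : P * expR (- u) = y + P * D by rewrite /y /D mulrBr; lra.
  rewrite e -addn1 natrD; lra.
exists n; split.
  have : (n.+1%:R : R) <= P.
    apply: le_trans jle _; rewrite ger_pMr // expR_le1; lra.
  by rewrite /P ler_nat.
have lnP : ln P = k%:R * L by rewrite /P natrX lnXn // mulr_natl.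
have j0 : (0 : R) < n.+1%:R by rewrite ltr0n.
have h1 : ln (n.+1%:R : R) <= k%:R * L - u.
  have := jle; rewrite -ler_ln ?posrE ?mulr_gt0 ?expR_gt0 //.
  by rewrite lnM ?posrE ?expR_gt0 // expRK lnP.
have h2 : k%:R * L - v <= ln (n.+1%:R : R).
  have : y <= n.+1%:R by apply: ltW.
  rewrite -ler_ln ?posrE //.
  by rewrite /y lnM ?posrE ?expR_gt0 // expRK lnP.
rewrite /log2 -/L; split.
  have : ln (n.+1%:R : R) / L <= k%:R - x.
    by rewrite ler_pdivrMr // mulrBl -/u.
  lra.
have : k%:R - (1 + rho) * x <= ln (n.+1%:R : R) / L.
  by rewrite ler_pdivlMr // mulrBl -/v.
lra.
Qed.
Lemma minfin (R : realType) (P : nat -> R -> Prop)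
  (mono : forall j d d', P j d -> 0 < d' -> d' <= d -> P j d')
  (ex : forall j, exists d : R, 0 < d /\ P j d) :
  forall n, exists d : R, 0 < d /\ forall j, (j <= n)%N -> P j d.
Proof.
elim=> [|n [d [d0 Hd]]].
  have [d [d0 Hd]] := ex 0%N; exists d; split => // j; rewrite leqn0 => /eqP ->; done.
have [e [e0 He]] := ex n.+1.
exists (Order.min d e); split; first by rewrite lt_min d0 e0.
move=> j; rewrite leq_eqVlt => /orP [/eqP ->|Hj].
  by apply: mono He _ _; [rewrite lt_min d0 e0 | rewrite ge_min lexx orbT].
by apply: mono (Hd j Hj) _ _; [rewrite lt_min d0 e0 | rewrite ge_min lexx].
Qed.

Lemma gap (R : realType) (I : Type) (a : I -> R) (Ha : forall i, 0 <= a i) (s : seq I) :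
  forall th : R, exists d : R, 0 < d /\ forall c : I -> nat,
    \sum_(i <- s) a i * (c i)%:R <= th \/ th + d <= \sum_(i <- s) a i * (c i)%:R.
Proof.
elim: s => [|i s IH] th.
  have [h|h] := lerP 0 th.
    by exists 1; split => // c; left; rewrite big_nil.
  by exists (- th); split; [lra | move=> c; right; rewrite big_nil; lra].
have rge0 : forall c : I -> nat, 0 <= \sum_(i <- s) a i * (c i)%:R.
  by move=> c; apply: sumr_ge0 => j _; apply: mulr_ge0.
have [ai0|aipos] := eqVneq (a i) 0.
  have [d [d0 Hd]] := IH th; exists d; split => // c.
  by rewrite big_cons ai0 mul0r add0r; apply: Hd.
have ai : 0 < a i by rewrite lt_def aipos Ha.
pose K := Num.Def.archi_bound (`|th| / a i).
have HK : th < a i * K%:R.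
  have := @archi_boundP _ (`|th| / a i) (divr_ge0 (normr_ge0 _) (ltW ai)).
  rewrite ltr_pdivrMr // => h; rewrite mulrC; apply: le_lt_trans h; exact: ler_norm.
have [d [d0 Hd]] := @minfin R (fun j d => forall c : I -> nat,
    \sum_(i <- s) a i * (c i)%:R <= th - a i * j%:R \/
    th - a i * j%:R + d <= \sum_(i <- s) a i * (c i)%:R)
   ltac:(move=> j d d' H d'0 le c; case: (H c) => h; [left|right] => //; lra)
   ltac:(move=> j; exact: IH) K.
pose mm : R := Order.min d (a i * K%:R - th).
have m1 : mm <= d by rewrite /mm ge_min lexx.
have m2 : mm <= a i * K%:R - th by rewrite /mm ge_min lexx orbT.
have mm0 : 0 < mm by rewrite /mm lt_min d0 /=; lra.
exists mm; split => // c; rewrite big_cons.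
have [lt|ge] := ltnP (c i) K.
  case: (Hd (c i) (ltnW lt) c) => h; [left|right].
  lra. lra.
right.
have : a i * K%:R <= a i * (c i)%:R by rewrite ler_pM2l // ler_nat.
have := rge0 c. lra.
Qed.
Lemma finmax (T : finType) (Q : T -> nat -> Prop) :
  (forall m, exists K, forall k, (K <= k)%N -> Q m k) ->
  exists K, forall m k, (K <= k)%N -> Q m k.
Proof.
move=> H.
suff : forall s : seq T, exists K, forall m k, m \in s -> (K <= k)%N -> Q m k.
  by case/(_ (index_enum T)) => K HK; exists K => m k; apply: HK; rewrite mem_index_enum.
elim=> [|a s [K HK]]; first by exists 0%N.
have [Ka HKa] := H a.
exists (maxn K Ka) => m k; rewrite inE => /orP [/eqP ->|ms] le.
  by apply: HKa; apply: leq_trans le; rewrite leq_maxr.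
by apply: HK => //; apply: leq_trans le; rewrite leq_maxl.
Qed.

Theorem mainTheorem10 (R : realType) (Sigma : finType) (l : nat)
  (pi sigma : seq Sigma -> Prop)
  (Hpi : forall u, pi u -> (size u <= l.-1)%N)
  (Hsigma : forall u, sigma u -> (size u <= l.-1)%N)
  (alpha : l.-tuple Sigma -> R) (Halpha : forall m, 0 <= alpha m)
  (theta : R) (Htheta : 0 <= theta) :
  exists (alpha' : l.-tuple Sigma -> R) (theta' : R),
    (forall m, 0 <= alpha' m) /\ 0 <= theta' /\
    (forall w, LLin pi sigma alpha theta w <-> LLin pi sigma alpha' theta' w) /\
    theta' = 1 /\
    (exists eps : R, 0 < eps /\
       forall w : seq Sigma,
         lin_val alpha' w < 1 - eps \/ lin_val alpha' w > 1 + eps) /\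
    (exists k : nat, forall m : l.-tuple Sigma,
       exists n : nat, (n < 2 ^ k)%N /\ alpha' m = k%:R - log2 (n.+1)%:R).
Proof.
have [d [d0 Hd]] := @gap R _ alpha Halpha (index_enum (l.-tuple Sigma)) theta.
have Hf : forall w, lin_val alpha w <= theta \/ theta + d <= lin_val alpha w.
  by move=> w; exact: (Hd (fun m => count_infix (tval m) w)).
have fge0 : forall (a : l.-tuple Sigma -> R), (forall m, 0 <= a m) -> forall w, 0 <= lin_val a w.
  by move=> a Ha w; apply: sumr_ge0 => m _; apply: mulr_ge0.
pose t := theta + d / 2.
have t0 : 0 < t by rewrite /t; lra.
pose g := d / (2 * t).
have g0 : 0 < g by rewrite /g divr_gt0 // mulr_gt0.
have key : t * g = d / 2.
  rewrite /g; field. exact: lt0r_neq0.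
pose beta m := alpha m / t.
have beta0 : forall m, 0 <= beta m by move=> m; rewrite /beta divr_ge0 // ltW.
pose rho := g / 2.
have rho0 : 0 < rho by rewrite /rho; lra.
have [K HK] := @finmax _ (fun m k => 0 < beta m -> exists n : nat, (n < 2 ^ k)%N /\
    beta m <= k%:R - log2 (n.+1)%:R /\ k%:R - log2 (n.+1)%:R <= (1 + rho) * beta m)
  ltac:(move=> m; have [bp|bn] := ltrP 0 (beta m);
    [ have [K HK] := @approx R (beta m) rho bp rho0; exists K => k Kk _; exact: HK
    | exists 0%N => k _ bp; exfalso; lra ]).
have L0 : 0 < ln (2 : R) by apply: ln_gt0; lra.
have Hn : forall m, exists n : nat, (n < 2 ^ K)%N /\
    beta m <= K%:R - log2 (n.+1)%:R /\ K%:R - log2 (n.+1)%:R <= (1 + rho) * beta m.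
  move=> m; have [bp|bn] := ltrP 0 (beta m); first exact: HK.
  have b0 : beta m = 0 by apply: le_anti; rewrite bn beta0.
  exists (2 ^ K).-1; rewrite prednK ?expn_gt0 //; split => //.
  have -> : K%:R - log2 (2 ^ K)%:R = 0 :> R.
    rewrite /log2 natrX lnXn; last lra.
    rewrite -[ln (2:R) *+ K]mulr_natr mulrAC divff ?mul1r ?subrr //; exact: lt0r_neq0.
  rewrite b0 mulr0; split => //; lra.
have [f Hfm] := choice Hn.
pose alpha' m := K%:R - log2 (f m).+1%:R : R.
have a'lo : forall m, beta m <= alpha' m by move=> m; case: (Hfm m) => _ [].
have a'hi : forall m, alpha' m <= (1 + rho) * beta m by move=> m; case: (Hfm m) => _ [].
have a'0 : forall m, 0 <= alpha' m by move=> m; apply: le_trans (a'lo m).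
have Fdef : forall w, lin_val alpha w / t = lin_val beta w.
  by move=> w; rewrite /lin_val mulr_suml; apply: eq_bigr => m _; rewrite /beta mulrAC.
have lo : forall w, lin_val beta w <= lin_val alpha' w.
  by move=> w; apply: ler_sum => m _; apply: ler_wpM2r.
have hi : forall w, lin_val alpha' w <= (1 + rho) * lin_val beta w.
  move=> w; rewrite /lin_val mulr_sumr; apply: ler_sum => m _.
  by rewrite mulrA; apply: ler_wpM2r.
have Fge0 : forall w, 0 <= lin_val beta w by move=> w; apply: fge0.
have case1 : forall w, lin_val alpha w <= theta -> lin_val alpha' w < 1 - g / 4.
  move=> w h.
  have hF : lin_val beta w <= 1 - g.
    rewrite -Fdef ler_pdivrMr // mulrBl mul1r [g * t]mulrC key; rewrite /t in h *; lra.
  have := hi w; have := Fge0 w; rewrite /rho => ? ?.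
  have := mulr_ge0 (ltW g0) (ltac:(by rewrite subr_ge0) : 0 <= 1 - g - lin_val beta w) => h2.
  nra.
have case2 : forall w, theta + d <= lin_val alpha w -> 1 + g / 4 < lin_val alpha' w.
  move=> w h.
  have hF : 1 + g <= lin_val beta w.
    rewrite -Fdef ler_pdivlMr // mulrDl mul1r [g * t]mulrC key; rewrite /t in h *; lra.
  have := lo w; lra.
exists alpha', 1; split => //; split => //; split.
  move=> w; rewrite /LLin; split; move=> [h1 [h2 [h3 h4]]]; do 3 (split => //).
    have := case1 w h4; lra.
  case: (Hf w) => // h; have := case2 w h; lra.
split => //; split.
  exists (g / 4); split; first lra.
  by move=> w; case: (Hf w) => h; [left; apply: case1 | right; apply: case2].
exists K => m; exists (f m); split; first by case: (Hfm m).
by [].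
Qed.
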